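(* Let $X$ be countable, $S$ a random variable on $X^m$, and $a\ge1$, $b\ge0$ integers with $a+b\le m$. Then $$I_S(a;b)\le a\cdot I_S(1;a+b-1),$$ where for integers $a',b'$ with $a'+b'\le m$, $I_S(a';b')=\mathbb E_{A,B}[I(S_A;S_B)]$ with $A$ a uniformly random $a'$-element subset of $[m]$ and $B$ a uniformly random $b'$-element subset of $[m]\setminus A$.
   Context: For $A\subseteq[m]$, $S_A=(S_j)_{j\in A}$. $I$ denotes mutual information; $I(S_A;S_\emptyset)=0$. *)

(* Defs.v *)
From HB Require Import structures.
From mathcomp Require Import all_boot all_order all_algebra.
From mathcomp Require Import all_classical all_reals all_analysis.
Set Implicit Arguments. Unset Strict Implicit. Unset Printing Implicit Defensive.
Import Order.TTheory GRing.Theory Num.Theory.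
Local Open Scope classical_set_scope.
Local Open Scope ring_scope.

(* A random variable S on X^m is represented by its law: a probability mass
   function on the (countable) outcome type {ffun 'I_m -> X}. *)
Definition is_pmf (R : realType) (T : choiceType) (p : T -> R) : Prop :=
  (forall x, 0 <= p x) /\ (\esum_(x in [set: T]) (p x)%:E)%E = 1%E.

(* S_A = (S_j)_{j in A}, encoded as the function that is Some (S j) on A and
   None off A (a faithful encoding of an element of X^A). *)
Definition restr (m : nat) (X : countType) (A : {set 'I_m})
  (x : {ffun 'I_m -> X}) : {ffun 'I_m -> option X} :=
  [ffun i => if i \in A then Some (x i) else None].

Definition pushpmf (R : realType) (T U : choiceType) (p : T -> R) (g : T -> U)
  (y : U) : R :=
  fine (\esum_(x in g @^-1` [set y]) (p x)%:E)%E.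

Definition mi_term (R : realType) (T U V : choiceType) (p : T -> R)
  (f : T -> U) (g : T -> V) (uv : U * V) : R :=
  let j := pushpmf p (fun x => (f x, g x)) uv in
  if j == 0 then 0
  else j * ln (j / (pushpmf p f uv.1 * pushpmf p g uv.2)).

Definition mutinf (R : realType) (T U V : choiceType) (p : T -> R)
  (f : T -> U) (g : T -> V) : \bar R :=
  ((\esum_(uv in [set: U * V]) (Num.max (mi_term p f g uv) 0)%:E)
   - (\esum_(uv in [set: U * V]) (Num.max (- mi_term p f g uv) 0)%:E))%E.

Definition MI (R : realType) (m : nat) (X : countType)
  (p : {ffun 'I_m -> X} -> R) (A B : {set 'I_m}) : \bar R :=
  mutinf p (restr A) (restr B).

Definition IS (R : realType) (m : nat) (X : countType)
  (p : {ffun 'I_m -> X} -> R) (a b : nat) : \bar R :=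
  (\sum_(A : {set 'I_m} | #|A| == a)
     ((('C(m, a))%:R^-1)%:E *
      \sum_(B : {set 'I_m} | (B \subset ~: A) && (#|B| == b))
         ((('C(m - a, b))%:R^-1)%:E * MI p A B)))%E.

(* Main.v *)
Require Import Defs.
From HB Require Import structures.
From mathcomp Require Import all_boot all_order all_algebra.
From mathcomp Require Import all_classical all_reals all_analysis.
From mathcomp Require Import ring lra zify.
Module W1.
Set Implicit Arguments. Unset Strict Implicit. Unset Printing Implicit Defensive.
Import Order.TTheory GRing.Theory Num.Theory.
Local Open Scope classical_set_scope.
Local Open Scope ring_scope.

Section Esum.
Variable R : realType.
Local Open Scope ereal_scope.

Lemma esumZ (T : choiceType) (S : set T) (r : R) (a : T -> \bar R) :
  (0 <= r)%R -> (forall x, 0 <= a x) ->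
  \esum_(i in S) (r%:E * a i) = r%:E * \esum_(i in S) a i.
Proof.
move=> r0 a0; rewrite /esum -ereal_supZl//; last first.
  by apply/set0P; exists 0; exists set0; [exact: fsets_set0|rewrite fsbig_set0].
congr ereal_sup; apply/seteqP; split => x /=.
  by move=> [A FA <-]; exists (\sum_(i \in A) a i); [exists A|rewrite ge0_mule_fsumr].
by move=> [y [A FA <-] <-]; exists A => //; rewrite ge0_mule_fsumr.
Qed.

Lemma esum_subset (T : choiceType) (S S' : set T) (a : T -> \bar R) :
  S `<=` S' -> (forall x, 0 <= a x) ->
  \esum_(i in S) a i <= \esum_(i in S') a i.
Proof.
move=> SS a0; rewrite esum_mkcond [X in _ <= X]esum_mkcond.
apply: le_esum => i _; case: ifPn => Si; first by rewrite ifT // inE; apply: SS; rewrite -inE.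
by case: ifPn.
Qed.

Lemma esum_part (T W : choiceType) (D : set T) (k : T -> W) (a : T -> \bar R) :
  (forall x, 0 <= a x) ->
  \esum_(x in D) a x = \esum_(w in [set: W]) \esum_(x in D `&` k @^-1` [set w]) a x.
Proof.
move=> a0; rewrite esum_esum//.
rewrite (reindex_esum D _ (fun x => (k x, x))) //; split.
- by move=> x Dx; split => //; split.
- by move=> x y _ _ [].
- move=> [w x] /= [_ [Dx kx]]; exists x => //=; rewrite /preimage /= in kx; by rewrite kx.
Qed.

End Esum.

End W1.
Import W1.
Module W2.
Set Implicit Arguments. Unset Strict Implicit. Unset Printing Implicit Defensive.
Import Order.TTheory GRing.Theory Num.Theory.
Local Open Scope classical_set_scope.
Local Open Scope ring_scope.

Section Prob.
Variables (R : realType) (T : choiceType) (p : T -> R).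
Hypothesis p0 : forall x, 0 <= p x.
Hypothesis p1 : (\esum_(x in [set: T]) (p x)%:E)%E = 1%E.

Local Open Scope ereal_scope.

Lemma esum_p_le1 (S : set T) : \esum_(x in S) (p x)%:E <= 1.
Proof. by rewrite -p1; apply: esum_subset => // x; rewrite lee_fin. Qed.

Lemma esum_p_ge0 (S : set T) : 0 <= \esum_(x in S) (p x)%:E.
Proof. by apply: esum_ge0 => x _; rewrite lee_fin. Qed.

Lemma esum_p_fin (S : set T) : \esum_(x in S) (p x)%:E \is a fin_num.
Proof.
rewrite ge0_fin_numE ?esum_p_ge0//; apply: (le_lt_trans (esum_p_le1 S)).
by rewrite ltry.
Qed.

Lemma pushE (U : choiceType) (f : T -> U) u :
  (pushpmf p f u)%:E = \esum_(x in f @^-1` [set u]) (p x)%:E.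
Proof. by rewrite /pushpmf fineK// esum_p_fin. Qed.

Lemma push_ge0 (U : choiceType) (f : T -> U) u : (0 <= pushpmf p f u)%R.
Proof. by rewrite -lee_fin pushE esum_p_ge0. Qed.

Lemma push_ge (U : choiceType) (f : T -> U) x : (p x <= pushpmf p f (f x))%R.
Proof.
rewrite -lee_fin pushE -(@esum_set1 _ _ x (fun x => (p x)%:E)) ?lee_fin//.
by apply: esum_subset => [y ->//|y]; rewrite lee_fin.
Qed.

Lemma push_eq (U V : choiceType) (f : T -> U) (g : T -> V) x :
  (forall y, f y = f x <-> g y = g x) -> pushpmf p f (f x) = pushpmf p g (g x).
Proof.
move=> H; rewrite /pushpmf; congr fine; congr esum.
by apply/seteqP; split => y /=; rewrite /preimage /= => /H.
Qed.

Lemma fiberE (W : choiceType) (k : T -> W) (c : W -> R) :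
  (forall w, 0 <= c w)%R ->
  \esum_(x in [set: T]) (p x * c (k x))%:E =
  \esum_(w in [set: W]) (pushpmf p k w * c w)%:E.
Proof.
move=> c0; rewrite (esum_part _ k); last by move=> x; rewrite lee_fin mulr_ge0.
apply: eq_esum => w _; rewrite setTI.
rewrite (eq_esum (b := fun x => (c w)%:E * (p x)%:E)); last first.
  by move=> x; rewrite /preimage /= => ->; rewrite -EFinM mulrC.
by rewrite esumZ// -?pushE -?EFinM 1?mulrC // => x; rewrite lee_fin.
Qed.

Lemma push_total (W : choiceType) (k : T -> W) :
  \esum_(w in [set: W]) (pushpmf p k w)%:E = 1.
Proof.
rewrite -p1 (esum_part _ k); last by move=> x; rewrite lee_fin.
by apply: eq_esum => w _; rewrite setTI pushE.
Qed.

Lemma marginal (U W : choiceType) (f : T -> U) (g : T -> W) w :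
  \esum_(u in [set: U]) (pushpmf p (fun x => (f x, g x)) (u, w))%:E =
  (pushpmf p g w)%:E.
Proof.
rewrite pushE (esum_part _ f); last by move=> x; rewrite lee_fin.
apply: eq_esum => u _; rewrite pushE; congr esum.
apply/seteqP; split => y; rewrite /preimage /=.
  by move=> [-> ->].
by move=> [] -> ->.
Qed.

End Prob.

End W2.
Import W2.
Module W3.
Set Implicit Arguments. Unset Strict Implicit. Unset Printing Implicit Defensive.
Import Order.TTheory GRing.Theory Num.Theory.
Local Open Scope classical_set_scope.
Local Open Scope ring_scope.

Section Alg.
Variable R : realType.
Local Open Scope ereal_scope.
Lemma ealg (Pa P1 P2 : \bar R) (na n1 n2 : R) : 0 <= Pa -> 0 <= P1 -> 0 <= P2 ->
  Pa + (n1 + n2)%:E = P1 + P2 + na%:E ->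
  Pa - na%:E = (P1 - n1%:E) + (P2 - n2%:E).
Proof.
case: Pa => [ra| |]; case: P1 => [r1| |]; case: P2 => [r2| |] //= _ _ _;
  rewrite ?EFinN /adde /= => -[]// E.
by congr EFin; lra.
Qed.
End Alg.

Lemma maxcase (R : realType) (y : R) :
  (0 <= y /\ Num.max y 0 = y) \/ (y < 0 /\ Num.max y 0 = 0).
Proof.
by case: (lerP 0 y) => h; [left|right].
Qed.

Lemma max_ge0 (R : realType) (y : R) : 0 <= Num.max y 0.
Proof. by case: (maxcase y) => -[h ->]. Qed.

Section Ex.
Variables (R : realType) (T : choiceType) (p : T -> R).
Hypothesis p0 : forall x, 0 <= p x.
Hypothesis p1 : (\esum_(x in [set: T]) (p x)%:E)%E = 1%E.

Local Open Scope ereal_scope.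

Definition pos (a : T -> R) := \esum_(x in [set: T]) (Num.max (a x) 0)%:E.
Definition neg (a : T -> R) := \esum_(x in [set: T]) (Num.max (- a x) 0)%:E.
Definition Ex (f : T -> R) :=
  pos (fun x => p x * f x)%R - neg (fun x => p x * f x)%R.

Lemma pos_ge0 a : 0 <= pos a.
Proof. by apply: esum_ge0 => x _; rewrite lee_fin max_ge0. Qed.
Lemma neg_ge0 a : 0 <= neg a.
Proof. by apply: esum_ge0 => x _; rewrite lee_fin max_ge0. Qed.

Lemma lin_gen (a b1 b2 : T -> R) : (forall x, a x = b1 x + b2 x)%R ->
  neg b1 \is a fin_num -> neg b2 \is a fin_num ->
  neg a \is a fin_num /\ pos a - neg a = (pos b1 - neg b1) + (pos b2 - neg b2).
Proof.
move=> ab f1 f2.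
have key x : (Num.max (a x) 0 + (Num.max (- b1 x) 0 + Num.max (- b2 x) 0) =
   (Num.max (b1 x) 0 + Num.max (b2 x) 0) + Num.max (- a x) 0)%R.
  have := ab x.
  case: (maxcase (a x)) => -[? ->]; case: (maxcase (- a x)) => -[? ->];
  case: (maxcase (b1 x)) => -[? ->]; case: (maxcase (- b1 x)) => -[? ->];
  case: (maxcase (b2 x)) => -[? ->]; case: (maxcase (- b2 x)) => -[? ->]; lra.
have le x : (Num.max (- a x) 0 <= Num.max (- b1 x) 0 + Num.max (- b2 x) 0)%R.
  have := ab x.
  case: (maxcase (- a x)) => -[? ->];
  case: (maxcase (- b1 x)) => -[? ->];
  case: (maxcase (- b2 x)) => -[? ->]; lra.
have fa : neg a \is a fin_num.
  rewrite ge0_fin_numE ?neg_ge0//; apply: (le_lt_trans (y := neg b1 + neg b2)).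
    rewrite /neg -esumD; last 2 first.
    - by move=> x _; rewrite lee_fin max_ge0.
    - by move=> x _; rewrite lee_fin max_ge0.
    by apply: le_esum => x _; rewrite -EFinD lee_fin.
  by rewrite ltey_eq fin_numD f1 f2.
split => //.
have E : pos a + (neg b1 + neg b2) = pos b1 + pos b2 + neg a.
  rewrite /pos /neg -!esumD; try by move=> x _; rewrite ?lee_fin ?adde_ge0 ?lee_fin ?max_ge0.
  by apply: eq_esum => x _; rewrite -!EFinD key.
  by move=> x _; rewrite -EFinD lee_fin addr_ge0 ?max_ge0.
  by move=> x _; rewrite -EFinD lee_fin addr_ge0 ?max_ge0.
rewrite -(fineK fa) -(fineK f1) -(fineK f2).
apply: ealg; rewrite ?pos_ge0 //.
by rewrite fineK // EFinD !fineK.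
Qed.

Lemma Ex_lin (f g1 g2 : T -> R) :
  (forall x, 0 < p x -> f x = g1 x + g2 x)%R ->
  neg (fun x => p x * g1 x)%R \is a fin_num ->
  neg (fun x => p x * g2 x)%R \is a fin_num ->
  neg (fun x => p x * f x)%R \is a fin_num /\ Ex f = Ex g1 + Ex g2.
Proof.
move=> H; apply: lin_gen => x.
have := p0 x; rewrite le0r => /orP[/eqP->|/H->]; first by rewrite !mul0r addr0.
by rewrite mulrDr.
Qed.

End Ex.

Section Gibbs.
Variables (R : realType) (T : choiceType) (p : T -> R).
Hypothesis p0 : forall x, 0 <= p x.
Hypothesis p1 : (\esum_(x in [set: T]) (p x)%:E)%E = 1%E.

Lemma gibbs_gen (phi s : T -> R) : (forall x, 0 <= s x) ->
  (forall x, 0 < p x -> 0 < s x /\ phi x = ln ((s x)^-1)) ->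
  (\esum_(x in [set: T]) (p x * s x)%:E <= 1)%E ->
  neg (fun x => p x * phi x)%R \is a fin_num /\ (0 <= Ex p phi)%E.
Proof.
move=> s0 H Q1.
have pw x : Num.max (- (p x * phi x)) 0 <= p x * s x /\
    p x + Num.max (- (p x * phi x)) 0 <= Num.max (p x * phi x) 0 + p x * s x.
  have := p0 x; rewrite le0r => /orP[/eqP->|px].
    by rewrite !mul0r oppr0 !maxxx addr0.
  have [sx ->] := H x px.
  have L : ln (s x) <= s x - 1.
    have e : 1 + (s x - 1) = s x by rewrite addrCA subrr addr0.
    by have := @le_ln1Dx R (s x - 1); rewrite e; apply; lra.
  have L2 : p x - p x * s x <= p x * ln (s x)^-1.
    rewrite lnV ?posrE // -mulrN; have : 0 <= p x * (s x - 1 - ln (s x)).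
      by apply: mulr_ge0; lra.
    by rewrite mulrBr mulrBr mulr1; lra.
  have ps : 0 <= p x * s x by apply: mulr_ge0; lra.
  by case: (maxcase (- (p x * ln (s x)^-1))) => -[? ->];
     case: (maxcase (p x * ln (s x)^-1)) => -[? ->]; split; lra.
have negQ : (neg (fun x => p x * phi x)%R <= \esum_(x in [set: T]) (p x * s x)%:E)%E.
  by apply: le_esum => x _; rewrite lee_fin; case: (pw x).
have nf : neg (fun x => p x * phi x)%R \is a fin_num.
  rewrite ge0_fin_numE ?neg_ge0 //; apply: (le_lt_trans negQ).
  by apply: (le_lt_trans Q1); rewrite ltry.
split => //.
rewrite /Ex suber_ge0 //.
have E1 : (1 + neg (fun x => p x * phi x)%R <=
     pos (fun x => p x * phi x)%R + \esum_(x in [set: T]) (p x * s x)%:E)%E.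
  rewrite -p1 /neg /pos -!esumD; first last.
  - by move=> x _; rewrite lee_fin; apply: mulr_ge0.
  - by move=> x _; rewrite lee_fin max_ge0.
  - by move=> x _; rewrite lee_fin max_ge0.
  - by move=> x _; rewrite lee_fin.
  by apply: le_esum => x _; rewrite -!EFinD lee_fin; case: (pw x).
have E2 := le_trans E1 (leeD2l (pos (fun x => p x * phi x)%R) Q1).
by rewrite addeC leeD2rE // in E2.
Qed.

End Gibbs.

End W3.
Import W3.
Module W4.
Set Implicit Arguments. Unset Strict Implicit. Unset Printing Implicit Defensive.
Import Order.TTheory GRing.Theory Num.Theory.
Local Open Scope classical_set_scope.
Local Open Scope ring_scope.

Definition pr (T U V : Type) (f : T -> U) (g : T -> V) := fun x => (f x, g x).

Section GQ.
Variables (R : realType) (T : choiceType) (p : T -> R).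
Hypothesis p0 : forall x, 0 <= p x.
Hypothesis p1 : (\esum_(x in [set: T]) (p x)%:E)%E = 1%E.

Definition dn (U : choiceType) (f : T -> U) x := pushpmf p f (f x).

Local Open Scope ereal_scope.

Lemma marginal2 (U W : choiceType) (g : T -> W) (h : T -> U) w :
  \esum_(u in [set: U]) (pushpmf p (fun x => (g x, h x)) (w, u))%:E =
  (pushpmf p g w)%:E.
Proof.
rewrite pushE // (esum_part _ h); last by move=> x; rewrite lee_fin.
apply: eq_esum => u _; rewrite pushE //; congr esum.
apply/seteqP; split => y; rewrite /preimage /=.
  by move=> [-> ->].
by move=> [] -> ->.
Qed.

Lemma esum_pair (A B : choiceType) (F : A * B -> \bar R) : (forall t, 0 <= F t) ->
  \esum_(t in [set: A * B]) F t = \esum_(a in [set: A]) \esum_(b in [set: B]) F (a, b).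
Proof.
move=> F0; rewrite esum_esum //.
have -> : [set: A] `*`` (fun=> [set: B]) = [set: A * B].
  by apply/seteqP; split => // -[a b].
by apply: eq_esum => -[a b].
Qed.

Lemma gibbsQ (U V W : choiceType) (f : T -> U) (g : T -> W) (h : T -> V) :
  \esum_(x in [set: T]) (p x * (dn (pr f g) x * dn (pr g h) x /
     (dn (pr g (pr f h)) x * dn g x)))%:E <= 1.
Proof.
set k := pr g (pr f h).
pose c (t : W * (U * V)) := (pushpmf p (pr f g) (t.2.1, t.1) *
   pushpmf p (pr g h) (t.1, t.2.2) / (pushpmf p k t * pushpmf p g t.1))%R.
have c0 t : (0 <= c t)%R.
  by rewrite /c; apply: divr_ge0; apply: mulr_ge0; apply: push_ge0.
have -> : \esum_(x in [set: T]) (p x * (dn (pr f g) x * dn (pr g h) x /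
     (dn (pr g (pr f h)) x * dn g x)))%:E =
     \esum_(x in [set: T]) (p x * c (k x))%:E by [].
rewrite fiberE //.
pose G (w : W) (u : U) (v : V) := (pushpmf p (pr f g) (u, w) *
   (pushpmf p (pr g h) (w, v) / pushpmf p g w))%R.
have G0 w u v : (0 <= G w u v)%R.
  by rewrite /G; apply: mulr_ge0; [|apply: divr_ge0]; apply: push_ge0.
apply: (le_trans (y := \esum_(t in [set: W * (U * V)]) (G t.1 t.2.1 t.2.2)%:E)).
  apply: le_esum => -[w [u v]] _; rewrite lee_fin /c /G /=.
  have := push_ge0 p0 p1 k (w, (u, v)); rewrite le0r => /orP[/eqP->|kp].
    by rewrite mul0r; apply: mulr_ge0; [|apply: divr_ge0]; apply: push_ge0.
  have := push_ge0 p0 p1 g w; rewrite le0r => /orP[/eqP->|gp].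
    by rewrite !mulr0 invr0 !mulr0.
  rewrite le_eqVlt; apply/orP; left; apply/eqP; field.
  by rewrite !gt_eqF.
rewrite esum_pair; last by move=> t; rewrite lee_fin.
rewrite -(push_total p0 p1 g); apply: le_esum => w _.
rewrite esum_pair; last by move=> t; rewrite lee_fin.
set q := pushpmf p g w.
have inner u : \esum_(v in [set: V]) (G w u v)%:E =
    (pushpmf p (pr f g) (u, w) * (q^-1 * q))%:E.
  transitivity (\esum_(v in [set: V]) ((pushpmf p (pr f g) (u, w) * q^-1)%:E *
      (pushpmf p (pr g h) (w, v))%:E)).
    by apply: eq_esum => v _; rewrite -EFinM /G /q; congr EFin; ring.
  rewrite esumZ; last 2 first.
  - by apply: mulr_ge0; [apply: push_ge0|rewrite invr_ge0; apply: push_ge0].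
  - by move=> v; rewrite lee_fin push_ge0.
  by rewrite marginal2 -EFinM mulrA.
rewrite (eq_esum (fun u _ => inner u)).
have -> : \esum_(u in [set: U]) (pushpmf p (pr f g) (u, w) * (q^-1 * q))%:E =
   \esum_(u in [set: U]) ((q^-1 * q)%:E * (pushpmf p (pr f g) (u, w))%:E).
  by apply: eq_esum => u _; rewrite -EFinM mulrC.
rewrite esumZ; last 2 first.
- by apply: mulr_ge0; [rewrite invr_ge0|]; apply: push_ge0.
- by move=> v; rewrite lee_fin push_ge0.
rewrite marginal //.
rewrite -/q -EFinM lee_fin.
have := push_ge0 p0 p1 g w; rewrite -/q le0r => /orP[/eqP->|gp].
  by rewrite invr0 !mul0r.
by rewrite mulVf ?gt_eqF // mul1r.
Qed.

End GQ.

Lemma maxpM (R : realType) (a L : R) : 0 <= a ->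
  Num.max (a * L) 0 = a * Num.max L 0.
Proof.
move=> a0; case: (maxcase L) => -[hL ->]; case: (maxcase (a * L)) => -[h ->];
  rewrite ?mulr0 //; nra.
Qed.

Section Conv.
Variables (R : realType) (T : choiceType) (p : T -> R).
Hypothesis p0 : forall x, 0 <= p x.
Hypothesis p1 : (\esum_(x in [set: T]) (p x)%:E)%E = 1%E.

Lemma mutinfE (U V : choiceType) (f : T -> U) (g : T -> V) (phi : T -> R) :
  (forall x, 0 < p x -> phi x = ln (dn p (pr f g) x / (dn p f x * dn p g x))) ->
  mutinf p f g = Ex p phi.
Proof.
move=> H; set k := pr f g.
pose L (uv : U * V) := ln (pushpmf p k uv / (pushpmf p f uv.1 * pushpmf p g uv.2)).
have pw x : p x * phi x = p x * L (k x).
  have := p0 x; rewrite le0r => /orP[/eqP->|px]; first by rewrite !mul0r.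
  by rewrite H.
have mt uv : mi_term p f g uv = pushpmf p k uv * L uv.
  rewrite /mi_term; case: ifPn => [/eqP e|//].
  by rewrite /k /pr e mul0r.
rewrite /mutinf /Ex /pos /neg; congr (_ - _)%E.
  rewrite (eq_esum (b := fun x => (p x * Num.max (L (k x)) 0)%:E)); last first.
    by move=> x _; rewrite pw maxpM.
  rewrite (@fiberE _ _ p p0 p1 _ k (fun w => Num.max (L w) 0)); last first.
    by move=> w; apply: max_ge0.
  by apply: eq_esum => uv _; rewrite mt maxpM // push_ge0.
rewrite (eq_esum (b := fun x => (p x * Num.max (- L (k x)) 0)%:E)); last first.
  by move=> x _; rewrite pw -mulrN maxpM.
rewrite (@fiberE _ _ p p0 p1 _ k (fun w => Num.max (- L w) 0)); last first.
  by move=> w; apply: max_ge0.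
by apply: eq_esum => uv _; rewrite mt -mulrN maxpM // push_ge0.
Qed.

End Conv.

End W4.
Import W4.
Module W5.
Set Implicit Arguments. Unset Strict Implicit. Unset Printing Implicit Defensive.
Import Order.TTheory GRing.Theory Num.Theory.
Local Open Scope classical_set_scope.
Local Open Scope ring_scope.

Section Sets.
Variables (R : realType) (X : countType) (m : nat).
Variable p : {ffun 'I_m -> X} -> R.
Hypothesis p0 : forall x, 0 <= p x.
Hypothesis p1 : (\esum_(x in [set: {ffun 'I_m -> X}]) (p x)%:E)%E = 1%E.

Definition D (S : {set 'I_m}) x := dn p (restr S) x.
Definition cm (A B C : {set 'I_m}) x :=
  ln (D (A :|: B :|: C) x * D C x / (D (A :|: C) x * D (B :|: C) x)).

Lemma restrE (S : {set 'I_m}) (x y : {ffun 'I_m -> X}) :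
  restr S y = restr S x <-> (forall i, i \in S -> y i = x i).
Proof.
split.
  move=> /ffunP H i iS; have := H i; rewrite !ffunE iS; by case.
by move=> H; apply/ffunP => i; rewrite !ffunE; case: ifP => // /H ->.
Qed.

Lemma D_pr2 (A B S : {set 'I_m}) x :
  (forall i, (i \in S) = (i \in A) || (i \in B)) ->
  dn p (pr (restr A) (restr B)) x = D S x.
Proof.
move=> HS; apply: push_eq => y; rewrite /pr; split.
  case=> /restrE hA /restrE hB; apply/restrE => i; rewrite HS => /orP[/hA|/hB]//.
move=> /restrE h; congr pair; apply/restrE => i iS; apply: h; rewrite HS iS ?orbT //.
Qed.

Lemma D_pr3 (A B C S : {set 'I_m}) x :
  (forall i, (i \in S) = [|| i \in A, i \in B | i \in C]) ->
  dn p (pr (restr A) (pr (restr B) (restr C))) x = D S x.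
Proof.
move=> HS; apply: push_eq => y; rewrite /pr; split.
  case=> /restrE hA /restrE hB /restrE hC; apply/restrE => i.
  by rewrite HS => /or3P[/hA|/hB|/hC].
move=> /restrE h; congr pair; [|congr pair]; apply/restrE => i iS; apply: h;
  by rewrite HS iS ?orbT.
Qed.

Lemma D0 x : D finset.set0 x = 1.
Proof.
rewrite /D /dn /pushpmf.
have -> : restr finset.set0 @^-1` [set restr finset.set0 x] = [set: {ffun 'I_m -> X}].
  by apply/seteqP; split => // y _; apply/restrE => i; rewrite inE.
by rewrite p1.
Qed.

Lemma D_ge S x : p x <= D S x.
Proof. exact: push_ge. Qed.

Lemma D_pos S x : 0 < p x -> 0 < D S x.
Proof. by move=> px; apply: lt_le_trans px (D_ge S x). Qed.

Lemma cmE A B C x : 0 < p x -> cm A B C x =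
  ln (D (A :|: B :|: C) x) + ln (D C x) - ln (D (A :|: C) x) - ln (D (B :|: C) x).
Proof.
move=> px; have P S : D S x \in Num.pos by rewrite posrE D_pos.
rewrite /cm ln_div ?lnM ?posrE ?mulr_gt0 ?divr_gt0 ?D_pos //.
ring.
Qed.

Lemma cm_gibbs A B C : neg (fun x => p x * cm A B C x) \is a fin_num /\
   (0 <= Ex p (cm A B C))%E.
Proof.
pose s x := D (A :|: C) x * D (B :|: C) x / (D (A :|: B :|: C) x * D C x).
apply: (@gibbs_gen _ _ _ p0 p1 _ s).
- by move=> x; apply: divr_ge0; apply: mulr_ge0; apply: push_ge0.
- move=> x px; split; first by rewrite /s ?divr_gt0 ?mulr_gt0 ?D_pos.
  by rewrite /cm /s invf_div.
apply: le_trans (gibbsQ p0 p1 (restr A) (restr C) (restr B)).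
rewrite le_eqVlt; apply/orP; left; apply/eqP; apply: eq_esum => x _.
rewrite /s (D_pr2 (S := A :|: C)); last by move=> i; rewrite inE.
rewrite (D_pr2 (S := B :|: C)); last by move=> i; rewrite inE orbC.
rewrite (D_pr3 (S := A :|: B :|: C)); last first.
  by move=> i; rewrite !inE; case: (i \in A); case: (i \in B); case: (i \in C).
by [].
Qed.

Lemma MIE A B : MI p A B = Ex p (cm A B finset.set0).
Proof.
apply: mutinfE => // x px.
rewrite /cm !finset.setU0 D0 mulr1 (D_pr2 (S := A :|: B)) //.
by move=> i; rewrite inE.
Qed.

End Sets.

End W5.
Import W5.
Module W6.
Set Implicit Arguments. Unset Strict Implicit. Unset Printing Implicit Defensive.
Import Order.TTheory GRing.Theory Num.Theory.
Local Open Scope ring_scope.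

Section Ineq.
Variables (R : realType) (X : countType) (m : nat).
Variable p : {ffun 'I_m -> X} -> R.
Hypothesis p0 : forall x, 0 <= p x.
Hypothesis p1 : (\esum_(x in [set: {ffun 'I_m -> X}]) (p x)%:E)%E = 1%E.

Local Notation cm := (cm p).
Local Notation D := (D p).

Lemma cm0E A B x : 0 < p x -> cm A B finset.set0 x =
  ln (D (A :|: B) x) - ln (D A x) - ln (D B x).
Proof. by move=> px; rewrite cmE // !finset.setU0 D0 // ln1 addr0. Qed.

Lemma MI_ge0 A B : (0 <= MI p A B)%E.
Proof. by rewrite MIE //; case: (cm_gibbs p0 p1 A B finset.set0). Qed.

Lemma MI_mono (j i : 'I_m) (C : {set 'I_m}) :
  (MI p [set j] C <= MI p [set j] ([set i] :|: C))%E.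
Proof.
rewrite !MIE //.
have [f1 _] := cm_gibbs p0 p1 [set j] C finset.set0.
have [f2 g2] := cm_gibbs p0 p1 [set j] [set i] C.
have pw : forall x, 0 < p x -> cm [set j] ([set i] :|: C) finset.set0 x =
   cm [set j] C finset.set0 x + cm [set j] [set i] C x.
  by move=> x px; rewrite !cm0E // cmE // !finset.setUA; ring.
have [_ ->] := Ex_lin p0 pw f1 f2.
by apply: leeDl.
Qed.

Lemma MI_step (i : 'I_m) (A B : {set 'I_m}) :
  (MI p ([set i] :|: A) B <= MI p A B + MI p [set i] (A :|: B))%E.
Proof.
rewrite !MIE //.
have [f1 g1] := cm_gibbs p0 p1 A B finset.set0.
have [f2 g2] := cm_gibbs p0 p1 [set i] B A.
have [f3 g3] := cm_gibbs p0 p1 [set i] A finset.set0.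
have pw1 : forall x, 0 < p x -> cm ([set i] :|: A) B finset.set0 x =
   cm A B finset.set0 x + cm [set i] B A x.
  move=> x px; rewrite !cm0E // cmE // (finset.setUC B A).
  have -> : [set i] :|: B :|: A = [set i] :|: A :|: B.
    by apply/setP => t; rewrite !inE; case: (t == i); case: (t \in A); case: (t \in B).
  ring.
have pw2 : forall x, 0 < p x -> cm [set i] (A :|: B) finset.set0 x =
   cm [set i] A finset.set0 x + cm [set i] B A x.
  move=> x px; rewrite !cm0E // cmE // (finset.setUC B A).
  have -> : [set i] :|: B :|: A = [set i] :|: (A :|: B).
    by apply/setP => t; rewrite !inE; case: (t == i); case: (t \in A); case: (t \in B).
  ring.
have [_ ->] := Ex_lin p0 pw1 f1 f2.
have [_ ->] := Ex_lin p0 pw2 f3 f2.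
apply: leeD2l; exact: leeDr.
Qed.

End Ineq.

End W6.
Import W6.
Module W7.
Set Implicit Arguments. Unset Strict Implicit. Unset Printing Implicit Defensive.
Import Order.TTheory GRing.Theory Num.Theory.
Local Open Scope ring_scope.

Section Star.
Variables (R : realType) (X : countType) (m : nat).
Variable p : {ffun 'I_m -> X} -> R.
Hypothesis p0 : forall x, 0 <= p x.
Hypothesis p1 : (\esum_(x in [set: {ffun 'I_m -> X}]) (p x)%:E)%E = 1%E.

Lemma MI0 B : MI p finset.set0 B = 0%E.
Proof.
rewrite MIE // /Ex /pos /neg.
have z x : p x * cm p finset.set0 B finset.set0 x = 0.
  have := p0 x; rewrite le0r => /orP[/eqP->|px]; first by rewrite mul0r.
  by rewrite cm0E // finset.set0U D0 // ln1; rewrite subr0 subrr mulr0.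
rewrite !esum1 ?sube0 // => x _; by rewrite z ?oppr0 maxxx.
Qed.

Local Open Scope ereal_scope.

Lemma star n : forall A B : {set 'I_m}, #|A| = n -> [disjoint A & B] ->
  MI p A B <= \sum_(j in A) MI p [set j] ((A :|: B) :\ j).
Proof.
elim: n => [|n IH] A B cA dAB.
  by move/cards0_eq: cA => ->; rewrite MI0 big_set0.
have [i iA] : exists i, i \in A.
  by apply/set0Pn; rewrite -card_gt0 cA.
have iB : i \notin B by rewrite (disjointFr dAB iA).
set A' := A :\ i.
have eA : A = [set i] :|: A' by rewrite finset.setD1K.
have cA' : #|A'| = n by move: cA; rewrite (cardsD1 i A) iA add1n => -[].
have dA' : [disjoint A' & B].
  exact: disjointWl (subD1set A i) dAB.
rewrite [X in MI p X B]eA.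
apply: (le_trans (MI_step p0 p1 i A' B)).
rewrite (bigD1 i) //= addeC.
have -> : (A :|: B) :\ i = A' :|: B.
  apply/setP => t; rewrite !inE; case: (eqVneq t i) => [->|] //=.
  by rewrite (negPf iB).
apply: leeD2l.
apply: (le_trans (IH A' B cA' dA')).
rewrite [X in _ <= X](eq_bigl (fun j => j \in A')); last by move=> j; rewrite !inE andbC.
apply: lee_sum => j jA'.
have -> : (A :|: B) :\ j = [set i] :|: ((A' :|: B) :\ j).
  apply/setP => t; rewrite !inE; case: (eqVneq t i) => [->|ti] /=.
    by rewrite iA; move: jA'; rewrite !inE => /andP[/negPf]; rewrite eq_sym => ->.
  by [].
exact: (MI_mono p0 p1).
Qed.

End Star.

End W7.
Import W7.
Module W8.
Set Implicit Arguments. Unset Strict Implicit. Unset Printing Implicit Defensive.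

Lemma cardsU_disj (T : finType) (A B : {set T}) :
  [disjoint A & B] -> #|A :|: B| = #|A| + #|B|.
Proof. by move=> d; apply/eqP; rewrite (leq_card_setU A B).2. Qed.

Section Comb.
Variables (m a b : nat).
Hypothesis a1 : 0 < a.
Local Notation S := {set 'I_m}.

Definition Pc (x : S * S * 'I_m) :=
  (#|x.1.1| == a) && ((x.1.2 \subset ~: x.1.1) && (#|x.1.2| == b)) && (x.2 \in x.1.1).
Definition hc (x : S * S * 'I_m) : 'I_m * S := (x.2, (x.1.1 :|: x.1.2) :\ x.2).
Definition Qc (y : 'I_m * S) := (y.2 \subset ~: [set y.1]) && (#|y.2| == (a + b).-1).

Lemma Pc_Qc x : Pc x -> Qc (hc x).
Proof.
case: x => [[A B] j]; rewrite /Pc /Qc /hc /= => /andP[/andP[/eqP cA /andP[sB /eqP cB]] jA].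
apply/andP; split.
  by apply/fintype.subsetP => t; rewrite !inE => /andP[].
have dAB : [disjoint A & B] by rewrite disjoint_sym finset.disjoints_subset.
have -> : (A :|: B) :\ j = (A :\ j) :|: B.
  apply/setP => t; rewrite !inE; case: (eqVneq t j) => [->|] //=.
  by rewrite (disjointFr dAB jA).
rewrite cardsU_disj; last exact: disjointWl (subD1set A j) dAB.
move: cA; rewrite (cardsD1 j A) jA => cA; rewrite cB -cA; apply/eqP; rewrite (_ : true + #|A :\ j| = #|A :\ j|.+1) //; lia.
Qed.

Definition gc (i : 'I_m) (C : S) (A' : S) : S * S * 'I_m :=
  (([set i] :|: A', C :\: A'), i).

Lemma count_fiber i C : Qc (i, C) ->
  #|[pred x | Pc x && (hc x == (i, C))]| = 'C((a + b).-1, a.-1).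
Proof.
rewrite /Qc /= => /andP[sC /eqP cC].
have iC : i \notin C by apply/negP => /(fintype.subsetP sC); rewrite !inE eqxx.
pose D := [set A' : S | A' \subset C & #|A'| == a.-1].
have <- : #|gc i C @: D| = 'C((a + b).-1, a.-1).
  rewrite card_in_imset; first by rewrite cards_draws cC.
  move=> A1 A2; rewrite !inE => /andP[s1 _] /andP[s2 _] [e1 _].
  apply/setP => t; move/setP: e1 => /(_ t); rewrite !inE.
  case: (eqVneq t i) => [->|] //=.
  move=> _; apply/idP/idP => [/(fintype.subsetP s1)|/(fintype.subsetP s2)]; by rewrite (negPf iC).
apply: eq_card => -[[A B] j]; rewrite !inE /Pc /hc /=.
apply/andP/imsetP.
- case=> /andP[/andP[/eqP cA /andP[sB /eqP cB]] jA] /eqP [ej eC].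
  subst j; exists (A :\ i).
    rewrite !inE; apply/andP; split.
      by apply/fintype.subsetP => t; rewrite -eC !inE => /andP[-> ->].
    by apply/eqP; move: cA; rewrite (cardsD1 i A) jA => <-.
  rewrite /gc finset.setD1K //; congr (_, _, _).
  apply/setP => t; rewrite -eC !inE.
  case: (eqVneq t i) => [->|ti] /=.
    by apply/negbTE; apply/negP => /(fintype.subsetP sB); rewrite !inE jA.
  case tA: (t \in A) => /=; last by [].
  by apply/negbTE; apply/negP => /(fintype.subsetP sB); rewrite !inE tA.
- case=> A' /[!inE] /andP[sA' /eqP cA'] [-> -> ->].
  have iA' : i \notin A' by apply: contra iC => /(fintype.subsetP sA').
  split; last first.
    apply/eqP; congr (_, _); apply/setP => t; rewrite !inE.
    case: (eqVneq t i) => [->|ti] /=; first by rewrite (negPf iC).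
    case tA': (t \in A') => //=.
    by rewrite (fintype.subsetP sA').
  apply/andP; split; last by rewrite !inE eqxx.
  apply/andP; split.
    by apply/eqP; rewrite cardsU1 iA' cA'; lia.
  apply/andP; split.
    apply/fintype.subsetP => t; rewrite !inE => /andP[tA' tC]; rewrite negb_or tA' andbT.
    by apply: contraNneq iC => <-.
  rewrite cardsD (finset.setIidPr sA') cA' cC; apply/eqP; lia.
Qed.

End Comb.

Section DC.
Variables (m a b : nat).
Hypothesis a1 : 0 < a.
Local Notation S := {set 'I_m}.
Import GRing.Theory.
Local Open Scope ring_scope.

Lemma dcount (V : nmodType) (G : 'I_m -> S -> V) :
  \sum_(A : S | #|A| == a) \sum_(B : S | (B \subset ~: A) && (#|B| == b))
     \sum_(j in A) G j ((A :|: B) :\ j) =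
  \sum_(y | Qc a b y) G y.1 y.2 *+ 'C((a + b).-1, a.-1).
Proof.
rewrite pair_big_dep /= pair_big_dep /=.
rewrite (eq_bigr (fun x => G (hc x).1 (hc x).2)) //.
rewrite (partition_big (hc (m:=m)) (Qc a b)); last by move=> x; apply: Pc_Qc.
apply: eq_bigr => y Qy.
rewrite (eq_bigr (fun _ => G y.1 y.2)); last by move=> x /andP[_ /eqP ->].
case: y Qy => i C Qy.
rewrite -(count_fiber a1 Qy) -sumr_const; apply: eq_bigl => x.
by rewrite !inE.
Qed.
End DC.


Lemma binsub (m a b : nat) : a + b <= m ->
  'C(a + b, a) * 'C(m, a + b) = 'C(m, a) * 'C(m - a, b).
Proof.
move=> abm.
have H1 : 'C(a + b, a) * (a`! * b`!) = (a + b)`!.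
  by rewrite -{2}(addKn a b) bin_fact // leq_addr.
have H2 : 'C(m, a + b) * ((a + b)`! * (m - (a + b))`!) = m`! by rewrite bin_fact.
have H3 : 'C(m, a) * (a`! * (m - a)`!) = m`!.
  by rewrite bin_fact // (leq_trans (leq_addr b a) abm).
have H4 : 'C(m - a, b) * (b`! * (m - (a + b))`!) = (m - a)`!.
  by rewrite subnDA bin_fact // leq_subRL ?(leq_trans (leq_addr b a) abm).
have K0 : 0 < a`! * b`! * (m - (a + b))`! by rewrite !muln_gt0 !fact_gt0.
apply/eqP; rewrite -(eqn_pmul2r K0); apply/eqP.
transitivity m`!.
  by rewrite -H2 -H1; ring.
by rewrite -H3 -H4; ring.
Qed.

Lemma coefnat (m a b : nat) : 0 < a -> a + b <= m ->
  'C((a + b).-1, a.-1) * (m * 'C(m.-1, (a + b).-1)) = a * ('C(m, a) * 'C(m - a, b)).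
Proof.
move=> a0 abm.
have ab0 : 0 < a + b by rewrite addn_gt0 a0.
have h1 : m * 'C(m.-1, (a + b).-1) = (a + b) * 'C(m, a + b).
  by rewrite mul_bin_diag prednK.
have h2 : (a + b) * 'C((a + b).-1, a.-1) = a * 'C(a + b, a).
  by rewrite mul_bin_diag prednK.
rewrite h1 mulnA (mulnC _ (a + b)) h2 -mulnA binsub //.
Qed.

End W8.
Import W8.
Module W9.
Set Implicit Arguments. Unset Strict Implicit. Unset Printing Implicit Defensive.
Import Order.TTheory GRing.Theory Num.Theory.
Local Open Scope ring_scope.

Lemma sum_singletons (m : nat) (V : nmodType) (G : {set 'I_m} -> V) (i0 : 'I_m) :
  \sum_(A : {set 'I_m} | #|A| == 1%N) G A = \sum_(i : 'I_m) G [set i].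
Proof.
rewrite (reindex_onto (fun i => [set i]) (fun A => odflt i0 [pick i in A])).
  apply: eq_bigl => i; rewrite cards1 eqxx /=.
  case: pickP => [j|/(_ i)]; last by rewrite inE eqxx.
  by rewrite inE => /eqP ->; rewrite eqxx.
move=> A /cards1P [x ->]; case: pickP => [j|/(_ x)]; last by rewrite inE eqxx.
by rewrite inE => /eqP ->.
Qed.

End W9.
Import W9.
Unset Implicit Arguments.
Import Order.TTheory GRing.Theory Num.Theory.
Local Open Scope ring_scope.
Theorem mainTheorem10 (R : realType) (X : countType) (m : nat)
  (p : {ffun 'I_m -> X} -> R) (a b : nat) :
  is_pmf p -> (1 <= a)%N -> (a + b <= m)%N ->
  (IS p a b <= (a%:R)%:E * IS p 1 (a + b - 1))%E.
Proof.
move=> [p0 p1] a1 abm.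
have m0 : (0 < m)%N by apply: leq_trans abm; rewrite addn_gt0 a1.
pose i0 : 'I_m := Ordinal m0.
set F := fun (i : 'I_m) (C : {set 'I_m}) => MI p [set i] C.
have F0 i C : (0 <= F i C)%E by apply: MI_ge0.
set K := 'C((a + b).-1, a.-1).
set SQ := (\sum_(y | Qc a b y) F y.1 y.2)%E.
set c1 := ('C(m, a)%:R : R)^-1; set c2 := ('C(m - a, b)%:R : R)^-1.
set c3 := ('C(m, 1)%:R : R)^-1; set c4 := ('C(m - 1, a + b - 1)%:R : R)^-1.
have c10 : 0 <= c1 by rewrite invr_ge0.
have c20 : 0 <= c2 by rewrite invr_ge0.
have stepA : (IS p a b <= (c1 * c2)%:E * \sum_(A : {set 'I_m} | #|A| == a)
    \sum_(B : {set 'I_m} | (B \subset ~: A) && (#|B| == b))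
      \sum_(j in A) F j ((A :|: B) :\ j))%E.
  rewrite /IS ge0_sume_distrr; last first.
    by move=> A _; apply: sume_ge0 => B _; apply: sume_ge0 => j _.
  apply: lee_sum => A cA.
  rewrite ge0_sume_distrr; last by move=> B _; apply: mule_ge0; rewrite ?lee_fin ?MI_ge0.
  rewrite ge0_sume_distrr; last by move=> B _; apply: sume_ge0.
  apply: lee_sum => B /andP[sB cB].
  rewrite EFinM -muleA; apply: lee_wpmul2l; first by rewrite lee_fin.
  apply: lee_wpmul2l; first by rewrite lee_fin.
  apply: (star p0 p1 (erefl #|A|)).
  by rewrite disjoint_sym finset.disjoints_subset.
have stepB : (\sum_(A : {set 'I_m} | #|A| == a)
    \sum_(B : {set 'I_m} | (B \subset ~: A) && (#|B| == b))
      \sum_(j in A) F j ((A :|: B) :\ j) = (K%:R)%:E * SQ)%E.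
  rewrite (@dcount m a b a1 _ F) mule_natl /SQ.
  by rewrite sumrMnl.
have stepC : (IS p 1 (a + b - 1) = (c3 * c4)%:E * SQ)%E.
  rewrite /IS (sum_singletons _ i0) /SQ ge0_sume_distrr; last by move=> y _.
  under eq_bigr => i _.
    rewrite ge0_sume_distrr; last by move=> B _; apply: mule_ge0; rewrite ?lee_fin ?invr_ge0 ?MI_ge0.
  over.
  rewrite pair_big_dep /=.
  apply: eq_big => [[i C]|[i C] _] /=.
    by rewrite /Qc subn1.
  by rewrite muleA -EFinM.
have coef : c1 * c2 * K%:R = a%:R * (c3 * c4).
  have E := congr1 (fun n => n%:R : R) (coefnat a1 abm).
  rewrite /= !natrM in E.
  have Xn : ('C(m, a)%:R : R) != 0.
    by rewrite pnatr_eq0 -lt0n bin_gt0 (leq_trans (leq_addr b a) abm).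
  have Yn : ('C(m - a, b)%:R : R) != 0.
    by rewrite pnatr_eq0 -lt0n bin_gt0 leq_subRL ?(leq_trans (leq_addr b a) abm) // addnC.
  have Mn : (m%:R : R) != 0 by rewrite pnatr_eq0 -lt0n.
  have Zn : ('C(m.-1, (a + b).-1)%:R : R) != 0.
    rewrite pnatr_eq0 -lt0n bin_gt0 -!subn1 leq_sub2r //.
  have -> : (K%:R : R) = a%:R * ('C(m, a)%:R * 'C(m - a, b)%:R) /
      (m%:R * 'C(m.-1, (a + b).-1)%:R).
    by rewrite -E mulfK // mulf_neq0.
  rewrite /c1 /c2 /c3 /c4 bin1 !subn1; field.
  by rewrite Xn Yn Mn Zn.
rewrite stepC; apply: (le_trans stepA); rewrite stepB muleA -EFinM coef EFinM muleA.
by [].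
Qed.
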